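(* Let $k$ be a commutative ring, let $R$ be a $k$-algebra and let $A$ be a bijective skew PBW extension over $R$ which is a $k$-algebra. Then the enveloping algebra $A^{e}=A\otimes_k A^{\mathrm{op}}$ is a bijective skew PBW extension over $R^{e}=R\otimes_k R^{\mathrm{op}}$.
   Context: Rings are associative with unity, not necessarily commutative. Given rings $R\subseteq A$, $A$ is a skew PBW extension over $R$, written $A=\sigma(R)\langle x_1,\dots,x_n\rangle$, if: (i) $R\subseteq A$; (ii) there are elements $x_1,\dots,x_n\in A$ such that $A$ is a free left $R$-module with basis $\mathrm{Mon}(A)=\{x_1^{\alpha_1}\cdots x_n^{\alpha_n}\mid (\alpha_1,\dots,\alpha_n)\in\mathbb{N}^n\}$; (iii) for each $1\le i\le n$ and each $r\in R\setminus\{0\}$ there is $c_{i,r}\in R\setminus\{0\}$ with $x_ir-c_{i,r}x_i\in R$; (iv) for all $1\le i,j\le n$ there is $c_{i,j}\in R\setminus\{0\}$ with $x_jx_i-c_{i,j}x_ix_j\in R+Rx_1+\cdots+Rx_n$. For such $A$, for each $i$ there exist an injective ring endomorphism $\sigma_i$ of $R$ and a $\sigma_i$-derivation $\delta_i$ of $R$ such that $x_ir=\sigma_i(r)x_i+\delta_i(r)$ for all $r\in R$. $A$ is called bijective if every $\sigma_i$ is bijective and the elements $c_{i,j}$ are invertible for $1\le i<j\le n$. For a $k$-algebra $B$, $B^{\mathrm{op}}$ is the opposite algebra (product $a*b=ba$) and $B^e=B\otimes_k B^{\mathrm{op}}$ is the enveloping algebra. *)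

(* Defs.v *)
From HB Require Import structures.
From mathcomp Require Import all_boot all_order all_algebra.
Set Implicit Arguments. Unset Strict Implicit. Unset Printing Implicit Defensive.
Import GRing.Theory.
Local Open Scope ring_scope.

Definition mon (A : ringType) (n : nat) (x : 'I_n -> A) (a : {ffun 'I_n -> nat}) : A :=
  \prod_(i < n) x i ^+ a i.

(* "R ⊆ A": R is identified with its image under an injective ring morphism. *)
Definition ring_embedding (R A : ringType) (iota : R -> A) : Prop :=
  [/\ injective iota, iota 1 = 1,
      (forall a b, iota (a + b) = iota a + iota b) &
      (forall a b, iota (a * b) = iota a * iota b)].

Definition skewPBW (R A : ringType) (iota : R -> A) (n : nat) (x : 'I_n -> A) : Prop :=
  [/\ ring_embedding iota,
      (forall a : A, exists (s : seq {ffun 'I_n -> nat}) (c : {ffun 'I_n -> nat} -> R),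
          a = \sum_(al <- s) iota (c al) * mon x al),
      (forall (s : seq {ffun 'I_n -> nat}) (c : {ffun 'I_n -> nat} -> R),
          uniq s -> \sum_(al <- s) iota (c al) * mon x al = 0 ->
          forall al, al \in s -> c al = 0),
      (forall (i : 'I_n) (r : R), r != 0 ->
          exists c : R, c != 0 /\ exists r' : R, x i * iota r - iota c * x i = iota r') &
      (forall i j : 'I_n, exists c : R, c != 0 /\
          exists (r0 : R) (r : 'I_n -> R),
            x j * x i - iota c * x i * x j = iota r0 + \sum_(l < n) iota (r l) * x l)].

Definition bijective_skewPBW (R A : ringType) (iota : R -> A) (n : nat) (x : 'I_n -> A) : Prop :=
  skewPBW iota x /\
  (forall i : 'I_n, exists (sigma delta : R -> R), bijective sigma /\
      forall r : R, x i * iota r = iota (sigma r) * x i + iota (delta r)) /\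
  (forall i j : 'I_n, (i < j)%N -> exists c : R,
      (exists d : R, c * d = 1 /\ d * c = 1) /\
      exists (r0 : R) (r : 'I_n -> R),
        x j * x i - iota c * x i * x j = iota r0 + \sum_(l < n) iota (r l) * x l).

Definition klinear (k : comRingType) (U V : lmodType k) (g : U -> V) : Prop :=
  forall (c : k) (u v : U), g (c *: u + v) = c *: g u + g v.

Definition kbilinear (k : comRingType) (M N : lmodType k) (P : lmodType k)
  (f : M -> N -> P) : Prop :=
  (forall (c : k) a a' b, f (c *: a + a') b = c *: f a b + f a' b) /\
  (forall (c : k) a b b', f a (c *: b + b') = c *: f a b + f a b').

Definition is_tensor (k : comRingType) (M N T : lmodType k) (t : M -> N -> T) : Prop :=
  kbilinear t /\
  forall (P : lmodType k) (f : M -> N -> P), kbilinear f ->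
    (exists g : T -> P, klinear g /\ forall a b, g (t a b) = f a b) /\
    (forall g1 g2 : T -> P, klinear g1 -> klinear g2 ->
       (forall a b, g1 (t a b) = f a b) -> (forall a b, g2 (t a b) = f a b) ->
       forall u, g1 u = g2 u).

(* (E, t) is the enveloping algebra B^e = B ⊗_k B^op of the k-algebra B:
   a tensor product whose multiplication is (a⊗b)(a'⊗b') = aa' ⊗ b'b. *)
Definition is_enveloping (k : comRingType) (B E : algType k) (t : B -> B -> E) : Prop :=
  is_tensor t /\ t 1 1 = 1 /\
  forall a b a' b', t a b * t a' b' = t (a * a') (b' * b).

(* Main.v *)
Require Import Defs.
From HB Require Import structures.
From mathcomp Require Import all_boot all_order all_algebra.
From Stdlib Require Import ClassicalEpsilon.
From mathcomp Require Import zify.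
Set Implicit Arguments. Unset Strict Implicit. Unset Printing Implicit Defensive.
Import GRing.Theory.
Local Open Scope ring_scope.

Definition pb (P : Prop) : bool := if excluded_middle_informative P then true else false.
Lemma pbP (P : Prop) : reflect P (pb P).
Proof. by rewrite /pb; case: excluded_middle_informative => h; constructor. Qed.

Section Span.
Context (k : comRingType) (M N T : lmodType k) (t : M -> N -> T).

Definition lspan (u : T) : Prop :=
  exists s : seq (k * M * N), u = \sum_(p <- s) p.1.1 *: t p.1.2 p.2.

Definition lspanb : {pred T} := fun u => pb (lspan u).

Lemma lspan_submod : submod_closed lspanb.
Proof.
split; first by apply/pbP; exists [::]; rewrite big_nil.
move=> c u v /pbP [s ->] /pbP [s' ->]; apply/pbP.
exists ([seq (c * p.1.1, p.1.2, p.2) | p <- s] ++ s').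
rewrite big_cat big_map /= scaler_sumr; congr (_ + _).
by apply: eq_bigr => p _; rewrite scalerA.
Qed.

HB.instance Definition _ := GRing.isSubmodClosed.Build k T lspanb lspan_submod.

Record spanT := SpanT { span_val :> T; _ : span_val \in lspanb }.
HB.instance Definition _ := [isSub for span_val].
HB.instance Definition _ := [Choice of spanT by <:].
HB.instance Definition _ := [SubChoice_isSubLmodule of spanT by <:].

End Span.

Section Lin.
Context (k : comRingType).

Lemma klin0 (U V : lmodType k) (g : U -> V) : klinear g -> g 0 = 0.
Proof.
move=> h; have := h 1 0 0; rewrite !scale1r !addr0 => E.
by apply: (addrI (g 0)); rewrite addr0 -E.
Qed.
Lemma klinD (U V : lmodType k) (g : U -> V) : klinear g -> forall u v, g (u + v) = g u + g v.
Proof. by move=> h u v; have := h 1 u v; rewrite !scale1r. Qed.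
Lemma klinZ (U V : lmodType k) (g : U -> V) : klinear g -> forall c u, g (c *: u) = c *: g u.
Proof. by move=> h c u; rewrite -[c *: u]addr0 h klin0 // addr0. Qed.
Lemma klinN (U V : lmodType k) (g : U -> V) : klinear g -> forall u, g (- u) = - g u.
Proof. by move=> h u; rewrite -scaleN1r klinZ // scaleN1r. Qed.
Lemma klinB (U V : lmodType k) (g : U -> V) : klinear g -> forall u v, g (u - v) = g u - g v.
Proof. by move=> h u v; rewrite klinD // klinN. Qed.
Lemma klin_sum (U V : lmodType k) (g : U -> V) I (r : seq I) (P : pred I) F :
  klinear g -> g (\sum_(i <- r | P i) F i) = \sum_(i <- r | P i) g (F i).
Proof. by move=> h; apply: (big_morph g (klinD h) (klin0 h)). Qed.
Lemma klin_comp (U V W : lmodType k) (g : V -> W) (f : U -> V) :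
  klinear g -> klinear f -> klinear (fun u => g (f u)).
Proof. by move=> hg hf c u v; rewrite hf hg. Qed.
Lemma klin_id (U : lmodType k) : klinear (fun u : U => u).
Proof. by []. Qed.
Lemma klin_add (U V : lmodType k) (g f : U -> V) :
  klinear g -> klinear f -> klinear (fun u => g u + f u).
Proof. by move=> hg hf c u v; rewrite hf hg scalerDr addrACA. Qed.
Lemma klin_opp (U V : lmodType k) (g : U -> V) :
  klinear g -> klinear (fun u => - g u).
Proof. by move=> hg c u v; rewrite hg opprD scalerN. Qed.

Section Bil.
Context (M N P : lmodType k) (f : M -> N -> P) (hf : kbilinear f).
Lemma bil_l b : klinear (fun a => f a b).
Proof. by move=> c a a'; apply: hf.1. Qed.
Lemma bil_r a : klinear (fun b => f a b).
Proof. by move=> c b b'; apply: hf.2. Qed.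
Lemma bil0l b : f 0 b = 0. Proof. exact: klin0 (bil_l b). Qed.
Lemma bil0r a : f a 0 = 0. Proof. exact: klin0 (bil_r a). Qed.
Lemma bilDl a a' b : f (a + a') b = f a b + f a' b. Proof. exact: (klinD (bil_l b) a a'). Qed.
Lemma bilDr a b b' : f a (b + b') = f a b + f a b'. Proof. exact: (klinD (bil_r a) b b'). Qed.
Lemma bilZl c a b : f (c *: a) b = c *: f a b. Proof. exact: (klinZ (bil_l b) c a). Qed.
Lemma bilZr c a b : f a (c *: b) = c *: f a b. Proof. exact: (klinZ (bil_r a) c b). Qed.
Lemma bilNl a b : f (- a) b = - f a b. Proof. exact: (klinN (bil_l b) a). Qed.
Lemma bilNr a b : f a (- b) = - f a b. Proof. exact: (klinN (bil_r a) b). Qed.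
Lemma bilBl a a' b : f (a - a') b = f a b - f a' b. Proof. exact: (klinB (bil_l b) a a'). Qed.
Lemma bilBr a b b' : f a (b - b') = f a b - f a b'. Proof. exact: (klinB (bil_r a) b b'). Qed.
Lemma bil_suml I (r : seq I) (Q : pred I) F b :
  f (\sum_(i <- r | Q i) F i) b = \sum_(i <- r | Q i) f (F i) b.
Proof. exact: (klin_sum r Q F (bil_l b)). Qed.
Lemma bil_sumr I (r : seq I) (Q : pred I) F a :
  f a (\sum_(i <- r | Q i) F i) = \sum_(i <- r | Q i) f a (F i).
Proof. exact: (klin_sum r Q F (bil_r a)). Qed.
End Bil.
End Lin.

Section Tensor.
Context (k : comRingType) (M N T : lmodType k) (t : M -> N -> T) (ht : is_tensor t).

Definition tlift (P : lmodType k) (f : M -> N -> P) : T -> P :=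
  epsilon (inhabits (fun _ => 0)) (fun g => klinear g /\ forall a b, g (t a b) = f a b).

Lemma tlift_spec (P : lmodType k) (f : M -> N -> P) : kbilinear f ->
  klinear (tlift f) /\ forall a b, tlift f (t a b) = f a b.
Proof. move=> hf; exact: (epsilon_spec _ _ (ht.2 P f hf).1). Qed.

Lemma tlift_lin (P : lmodType k) (f : M -> N -> P) : kbilinear f -> klinear (tlift f).
Proof. by move=> hf; case: (tlift_spec hf). Qed.
Lemma tlift_t (P : lmodType k) (f : M -> N -> P) : kbilinear f -> forall a b, tlift f (t a b) = f a b.
Proof. by move=> hf; case: (tlift_spec hf). Qed.

Lemma bil_comp (P : lmodType k) (g : T -> P) : klinear g -> kbilinear (fun a b => g (t a b)).
Proof.
move=> hg; split=> c a a' b /=.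
  by rewrite (bilDl ht.1) (bilZl ht.1) (klinD hg) (klinZ hg).
by rewrite (bilDr ht.1) (bilZr ht.1) (klinD hg) (klinZ hg).
Qed.

Lemma tensor_ext (P : lmodType k) (g1 g2 : T -> P) : klinear g1 -> klinear g2 ->
  (forall a b, g1 (t a b) = g2 (t a b)) -> forall u, g1 u = g2 u.
Proof.
move=> h1 h2 E; have hf := bil_comp h1.
by apply: ((ht.2 P _ hf).2 g1 g2 h1 h2) => // a b; rewrite E.
Qed.

Lemma t_in_span a b : t a b \in lspanb t.
Proof. by apply/pbP; exists [:: (1, a, b)]; rewrite big_seq1 scale1r. Qed.

Lemma tensor_span u : lspan t u.
Proof.
pose t' a b : spanT t := SpanT (t_in_span a b).
have hval : klinear (fun x : spanT t => span_val x) by move=> c x y.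
have ht' : kbilinear t'.
  split=> c a a' b; apply: val_inj => /=; [exact: ht.1.1 | exact: ht.1.2].
case: (tlift_spec ht') => hl hv.
have := tensor_ext (klin_comp hval hl) (klin_id (U := T)) _ u.
move=> <-; last by move=> a b /=; rewrite hv.
case: (tlift t' u) => v /=; by move/pbP.
Qed.

End Tensor.

Section Mons.
Context (n : nat).
Local Notation mi := {ffun 'I_n -> nat}.

Definition deg (a : mi) : nat := (\sum_(l < n) a l)%N.
Definition mons (d : nat) : seq mi :=
  [seq a <- undup (map (fun f : {ffun 'I_n -> 'I_d} => [ffun l => nat_of_ord (f l)] : mi)
     (enum {ffun 'I_n -> 'I_d})) | (deg a < d)%N].

Lemma mons_uniq d : uniq (mons d).
Proof. exact/filter_uniq/undup_uniq. Qed.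

Lemma le_deg (a : mi) l : (a l <= deg a)%N.
Proof. by rewrite /deg (bigD1 l) //= leq_addr. Qed.

Lemma mem_mons d a : (a \in mons d) = (deg a < d)%N.
Proof.
rewrite mem_filter mem_undup andb_idr //; case: d => [|d] ha //.
apply/mapP; exists [ffun l => inord (a l)]; first by rewrite mem_enum.
apply/ffunP => l; rewrite !ffunE inordK //.
exact: leq_ltn_trans (le_deg a l) ha.
Qed.

Lemma sum_mons_filter (V : nmodType) d e (F : mi -> V) : (d <= e)%N ->
  \sum_(a <- mons e | (deg a < d)%N) F a = \sum_(a <- mons d) F a.
Proof.
move=> de; rewrite -big_filter; apply: perm_big; apply: uniq_perm.
- exact/filter_uniq/mons_uniq.
- exact: mons_uniq.
move=> a; rewrite mem_filter !mem_mons; apply/andP/idP => [[]//|h]; split=> //.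
exact: leq_trans h de.
Qed.

Lemma sum_pick (V : nmodType) (I : eqType) (r : seq I) (a : I) (F : I -> V) :
  uniq r -> a \in r -> \sum_(b <- r | b == a) F b = F a.
Proof.
move=> ur ar; rewrite (big_rem a) //= eqxx big1_seq ?addr0 // => b /andP[/eqP -> ].
by rewrite mem_rem_uniqF.
Qed.

Lemma regroup (V : nmodType) (I : eqType) (s r : seq I) (G : I -> V) :
  uniq r -> {subset s <= r} ->
  \sum_(b <- s) G b = \sum_(a <- r) \sum_(b <- s | b == a) G b.
Proof.
move=> ur sr; rewrite (exchange_big_dep predT) //=; apply: eq_big_seq => b bs.
rewrite (eq_bigl (fun a => a == b)); last by move=> a; rewrite eq_sym.
by rewrite (sum_pick (fun=> G b) ur (sr _ bs)).
Qed.

Definition addev (a : mi) (i : 'I_n) : mi := [ffun l => (a l + (l == i))%N].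
Definition subev (a : mi) (i : 'I_n) : mi := [ffun l => (a l - (l == i))%N].

Lemma deg_addev (a : mi) (i : 'I_n) : deg (addev a i) = (deg a).+1.
Proof.
rewrite /deg; under eq_bigr do rewrite ffunE; rewrite big_split /=.
have -> : (\sum_(l < n) (l == i : nat) = 1)%N.
  by rewrite (bigD1 i) //= eqxx big1 // => l /negbTE ->.
by rewrite addn1.
Qed.

Lemma subevK (a : mi) (i : 'I_n) : (0 < a i)%N -> addev (subev a i) i = a.
Proof.
move=> h; apply/ffunP => l; rewrite !ffunE; case: eqP => [->|_].
  by rewrite subnK.
by rewrite /= subn0 addn0.
Qed.

Lemma deg_subev (a : mi) (i : 'I_n) : (0 < a i)%N -> (deg (subev a i)).+1 = deg a.
Proof. by move=> h; rewrite -(deg_addev _ i) subevK. Qed.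

Lemma first_idx (a : mi) : deg a != 0 ->
  exists j : 'I_n, (0 < a j)%N /\ forall l : 'I_n, (l < j)%N -> a l = 0%N.
Proof.
move=> h.
have [l0 hl0] : exists l, (0 < a l)%N.
  apply/existsP; apply: contraR h => /existsPn hn; apply/eqP; rewrite /deg.
  by rewrite big1 // => l _; move: (hn l); rewrite lt0n negbK => /eqP.
case: (@arg_minnP _ l0 (fun l => (0 < a l)%N) (fun l => val l) hl0) => j hj hmin; exists j; split=> // l hl.
apply/eqP; rewrite -leqn0 leqNgt; apply/negP => /hmin.
by rewrite leqNgt hl.
Qed.

Lemma subev_lt (a : mi) (j l : 'I_n) : (forall l : 'I_n, (l < j)%N -> a l = 0%N) -> (l < j)%N -> subev a j l = 0%N.
Proof.
move=> h hl; rewrite ffunE h //; case: eqP => // E; by move: hl; rewrite E ltnn.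
Qed.
End Mons.

Section MonRing.
Context (A : ringType) (n : nat) (x : 'I_n -> A).
Local Notation mi := {ffun 'I_n -> nat}.

Lemma prod_split (G : 'I_n -> A) (i : 'I_n) : (forall l : 'I_n, (l < i)%N -> G l = 1) ->
  \prod_(l < n) G l = G i * \prod_(i.+1 <= m < n) G (insubd i m).
Proof.
move=> hG.
have E : \prod_(l < n) G l = \prod_(0 <= m < n) G (insubd i m).
  rewrite big_mkord; apply: eq_bigr => l _; congr G; apply: val_inj.
  by rewrite val_insubd ltn_ord.
rewrite E (@big_cat_nat _ _ _ i 0 n) /= ?(ltnW (ltn_ord i)) // big1_seq ?mul1r.
  rewrite (big_ltn (ltn_ord i)); congr (G _ * _); apply: val_inj.
  by rewrite val_insubd ltn_ord.
move=> m /andP[_]; rewrite mem_index_iota => /andP[_ hm]; apply: hG.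
by rewrite val_insubd (ltn_trans hm (ltn_ord i)).
Qed.

Lemma mon_addev (a : mi) (i : 'I_n) : (forall l : 'I_n, (l < i)%N -> a l = 0%N) ->
  x i * mon x a = mon x (addev a i).
Proof.
move=> h; rewrite /mon (@prod_split (fun l => x l ^+ a l) i); last first.
  by move=> l hl; rewrite h.
rewrite (@prod_split (fun l => x l ^+ addev a i l) i); last first.
  move=> l hl; rewrite ffunE h // add0n.
  by have -> : (l == i) = false by apply/negbTE; rewrite neq_ltn hl.
rewrite ffunE eqxx addn1 exprS mulrA; congr (_ * _); apply: eq_big_nat => m /andP[h1 h2].
rewrite ffunE; have -> : (insubd i m == i) = false.
  apply/negbTE; rewrite neq_ltn val_insubd h2 /=.
  by rewrite h1 orbT.
by rewrite addn0.
Qed.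

Definition mzero : mi := [ffun => 0%N].

Lemma mon0 : mon x mzero = 1.
Proof. by rewrite /mon big1 // => l _; rewrite ffunE expr0. Qed.

Lemma mon_ev (i : 'I_n) : mon x (addev mzero i) = x i.
Proof. by rewrite -mon_addev ?mon0 ?mulr1 // => l _; rewrite ffunE. Qed.

Lemma deg0 : deg mzero = 0%N.
Proof. by rewrite /deg big1 // => l _; rewrite ffunE. Qed.

Lemma deg_eq0 (a : mi) : deg a = 0%N -> a = mzero.
Proof.
move=> /eqP; rewrite /deg sum_nat_eq0 => /forallP h; apply/ffunP => l.
by rewrite ffunE; apply/eqP; move: (h l) => /implyP; apply.
Qed.

End MonRing.

Section Coef.
Context (k : comRingType) (R A : lmodType k) (n : nat).
Local Notation mi := {ffun 'I_n -> nat}.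
Context (B : mi -> R -> A) (hB : forall a, klinear (B a)).

Definition Sp d (f : mi -> R) : A := \sum_(a <- mons n d) B a (f a).
Definition ext d (f : mi -> R) (a : mi) : R := if a \in mons n d then f a else 0.

Lemma Sp_ext d f : Sp d (ext d f) = Sp d f.
Proof. by apply: eq_big_seq => a ha; rewrite /ext ha. Qed.

Lemma Sp_lift d e f : (d <= e)%N -> Sp d f = Sp e (ext d f).
Proof.
move=> de; rewrite /Sp -(sum_mons_filter _ de) big_mkcond /=; apply: eq_big_seq => a _.
by rewrite /ext mem_mons; case: ifP => //; rewrite klin0.
Qed.

Lemma Sp_D d f g : Sp d f + Sp d g = Sp d (fun a => f a + g a).
Proof. by rewrite /Sp -big_split; apply: eq_bigr => a _; rewrite klinD. Qed.

Lemma Sp_Z d c f : c *: Sp d f = Sp d (fun a => c *: f a).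
Proof. by rewrite /Sp scaler_sumr; apply: eq_bigr => a _; rewrite klinZ. Qed.

Lemma Sp_N d f : - Sp d f = Sp d (fun a => - f a).
Proof. by rewrite /Sp -sumrN; apply: eq_bigr => a _; rewrite klinN. Qed.

Lemma Sp_B d f g : Sp d f - Sp d g = Sp d (fun a => f a - g a).
Proof. by rewrite Sp_N Sp_D. Qed.

Lemma Sp0 d : Sp d (fun _ => 0) = 0.
Proof. by rewrite /Sp big1 // => a _; rewrite klin0. Qed.

Lemma Sp_single b r : B b r = Sp (deg b).+1 (fun a => if a == b then r else 0).
Proof.
rewrite /Sp; transitivity (\sum_(a <- mons n (deg b).+1 | a == b) B a r).
  by rewrite sum_pick ?mons_uniq // mem_mons.
rewrite big_mkcond /=; apply: eq_bigr => a _; case: ifP => //.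
by rewrite klin0.
Qed.

Section CoefInd.
Hypothesis ind : forall d f, Sp d f = 0 -> forall a, a \in mons n d -> f a = 0.

Lemma Sp_inj d f g : Sp d f = Sp d g -> forall a, a \in mons n d -> f a = g a.
Proof.
move=> E a ha; apply/eqP; rewrite -subr_eq0; apply/eqP.
by apply: (ind (d := d) (f := fun a => f a - g a)) => //; rewrite -Sp_B E subrr.
Qed.

Hypothesis gen : forall u, exists d f, u = Sp d f.

Definition coef (u : A) (a : mi) : R :=
  let p := epsilon (inhabits (0%N, fun _ : mi => 0 : R)) (fun p => u = Sp p.1 p.2) in
  ext p.1 p.2 a.

Lemma coef_Sp d f a : coef (Sp d f) a = ext d f a.
Proof.
rewrite /coef; set p := epsilon _ _.
have hp : Sp d f = Sp p.1 p.2.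
  by apply: (epsilon_spec _ (fun p => Sp d f = Sp p.1 p.2)); exists (d, f).
have E : Sp (maxn d p.1) (ext d f) = Sp (maxn d p.1) (ext p.1 p.2).
  by rewrite -!Sp_lift ?leq_maxl ?leq_maxr.
case ha : (a \in mons n (maxn d p.1)).
  by rewrite (Sp_inj E ha).
move: ha; rewrite !mem_mons /ext !mem_mons.
by rewrite leq_max => /norP[/negbTE -> /negbTE ->].
Qed.

Lemma coef_lin a : klinear (fun u => coef u a).
Proof.
move=> c u v; have [d [f ->]] := gen u; have [e [g ->]] := gen v.
rewrite (Sp_lift f (leq_maxl d e)) (Sp_lift g (leq_maxr d e)) Sp_Z Sp_D !coef_Sp.
by rewrite /ext; case: ifP => _; rewrite ?scaler0 ?addr0.
Qed.

Lemma coef_B b r a : coef (B b r) a = if b == a then r else 0.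
Proof.
rewrite Sp_single coef_Sp /ext mem_mons; case: (eqVneq b a) => [->|ne].
  by rewrite ?eqxx ltnS leqnn.
by rewrite ?(eq_sym a b) ?(negbTE ne); case: ifP.
Qed.

Lemma coef_low d f a : (d <= deg a)%N -> coef (Sp d f) a = 0.
Proof. by move=> h; rewrite coef_Sp /ext mem_mons ltnNge h. Qed.

End CoefInd.
End Coef.

Section SkewA.
Context (k : comRingType) (R A : algType k) (iota : R -> A) (n : nat) (x : 'I_n -> A).
Local Notation mi := {ffun 'I_n -> nat}.
Hypothesis hemb : ring_embedding iota.
Hypothesis iota_k : forall (c : k) (r : R), iota (c *: r) = c *: iota r.
Hypothesis hgen : forall a : A, exists (s : seq mi) (c : mi -> R),
  a = \sum_(al <- s) iota (c al) * mon x al.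
Hypothesis hind : forall (s : seq mi) (c : mi -> R),
  uniq s -> \sum_(al <- s) iota (c al) * mon x al = 0 -> forall al, al \in s -> c al = 0.
Hypothesis hsig : forall i : 'I_n, exists (sigma delta : R -> R), bijective sigma /\
  forall r : R, x i * iota r = iota (sigma r) * x i + iota (delta r).
Hypothesis hrel : forall i j : 'I_n, exists c : R, c != 0 /\
  exists (r0 : R) (r : 'I_n -> R),
    x j * x i - iota c * x i * x j = iota r0 + \sum_(l < n) iota (r l) * x l.

Lemma iotaD a b : iota (a + b) = iota a + iota b. Proof. by case: hemb. Qed.
Lemma iotaM a b : iota (a * b) = iota a * iota b. Proof. by case: hemb. Qed.
Lemma iota1 : iota 1 = 1. Proof. by case: hemb. Qed.
Lemma iota_inj : injective iota. Proof. by case: hemb. Qed.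
Lemma iota_lin : klinear iota.
Proof. by move=> c u v; rewrite iotaD iota_k. Qed.
Lemma iota0 : iota 0 = 0. Proof. exact: (klin0 iota_lin). Qed.
Lemma iotaN a : iota (- a) = - iota a. Proof. exact: (klinN iota_lin a). Qed.
Lemma iotaB a b : iota (a - b) = iota a - iota b. Proof. exact: (klinB iota_lin a b). Qed.
Lemma iota_sum I (r : seq I) (P : pred I) F :
  iota (\sum_(i <- r | P i) F i) = \sum_(i <- r | P i) iota (F i).
Proof. exact: (klin_sum r P F iota_lin). Qed.

Definition Bl (a : mi) (r : R) : A := iota r * mon x a.
Definition Br (a : mi) (r : R) : A := mon x a * iota r.
Lemma Bl_lin a : klinear (Bl a).
Proof. by move=> c u v; rewrite /Bl iota_lin mulrDl scalerAl. Qed.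
Lemma Br_lin a : klinear (Br a).
Proof. by move=> c u v; rewrite /Br iota_lin mulrDr scalerAr. Qed.

Notation Ls := (Sp Bl).
Notation Rs := (Sp Br).

Lemma L_ind : forall d f, Ls d f = 0 -> forall a, a \in mons n d -> f a = 0.
Proof. by move=> d f h a ha; apply: (hind (mons_uniq n d) h). Qed.

Lemma L_gen : forall u, exists d f, u = Ls d f.
Proof.
move=> u; have [s [c ->]] := hgen u.
pose d := (\max_(al <- s) deg al).+1.
exists d, (fun a => \sum_(b <- s | b == a) c b).
rewrite (regroup _ (mons_uniq n d)); last first.
  by move=> b bs; rewrite mem_mons ltnS; apply: leq_bigmax_seq.
apply: eq_bigr => a _; rewrite /Bl iota_sum mulr_suml; apply: eq_bigr => b /eqP -> //.
Qed.

Definition lc := coef Bl.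

Lemma lc_lin a : klinear (fun u => lc u a).
Proof. exact: (coef_lin Bl_lin L_ind L_gen). Qed.
Lemma lc_B b r a : lc (Bl b r) a = if b == a then r else 0.
Proof. exact: (coef_B Bl_lin L_ind). Qed.
Lemma lc_low d f a : (d <= deg a)%N -> lc (Ls d f) a = 0.
Proof. exact: (coef_low Bl_lin L_ind). Qed.

Definition G d u := exists f, u = Ls d f.

Lemma G0 d : G d 0. Proof. by exists (fun _ => 0); rewrite Sp0 // => a; apply: Bl_lin. Qed.
Lemma GD d u v : G d u -> G d v -> G d (u + v).
Proof. by move=> [f ->] [g ->]; exists (fun a => f a + g a); rewrite Sp_D // => a; apply: Bl_lin. Qed.
Lemma GN d u : G d u -> G d (- u).
Proof. by move=> [f ->]; exists (fun a => - f a); rewrite Sp_N // => a; apply: Bl_lin. Qed.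
Lemma GB d u v : G d u -> G d v -> G d (u - v).
Proof. by move=> hu hv; apply: GD => //; apply: GN. Qed.
Lemma G_mono d e u : (d <= e)%N -> G d u -> G e u.
Proof. by move=> de [f ->]; exists (ext d f); rewrite (Sp_lift _ _ de) // => a; apply: Bl_lin. Qed.
Lemma G_sum d (I : eqType) (r : seq I) (F : I -> A) : (forall i, i \in r -> G d (F i)) ->
  G d (\sum_(i <- r) F i).
Proof.
move=> h; rewrite big_seq; apply: (big_ind (G d)); [exact: G0 | exact: GD | exact: h].
Qed.
Lemma G_Bl d a r : (deg a < d)%N -> G d (iota r * mon x a).
Proof.
move=> h; apply: (G_mono h); exists (fun b => if b == a then r else 0).
by rewrite -Sp_single // => b; apply: Bl_lin.
Qed.
Lemma G_mon d a : (deg a < d)%N -> G d (mon x a).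
Proof. by move=> h; rewrite -[mon x a]mul1r -iota1; apply: G_Bl. Qed.
Lemma G_mulL d r u : G d u -> G d (iota r * u).
Proof.
move=> [f ->]; exists (fun a => r * f a); rewrite /Sp mulr_sumr; apply: eq_bigr => a _.
by rewrite /Bl mulrA iotaM.
Qed.
Lemma G_lc d u a : G d u -> (d <= deg a)%N -> lc u a = 0.
Proof. by move=> [f ->]; apply: lc_low. Qed.
Lemma G_iota d r : (0 < d)%N -> G d (iota r).
Proof. by move=> h; rewrite -[iota r]mulr1 -(mon0 x); apply: G_Bl; rewrite deg0. Qed.

Definition ev (i : 'I_n) : mi := addev (mzero n) i.

Lemma lc_D u v a : lc (u + v) a = lc u a + lc v a.
Proof. exact: (klinD (lc_lin a)). Qed.

Lemma lin1_unique i a b a' b' :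
  iota a * x i + iota b = iota a' * x i + iota b' -> a = a' /\ b = b'.
Proof.
have E : forall a b, iota a * x i + iota b = Bl (ev i) a + Bl (mzero n) b.
  by move=> a0 b0; rewrite /Bl mon_ev mon0 mulr1.
have ne : (ev i == (mzero n)) = false.
  by apply/negbTE/eqP => h; have := deg_addev (mzero n) i; rewrite -/(ev i) h deg0.
move=> h; have h1 := congr1 (fun u => lc u (ev i)) h.
have h2 := congr1 (fun u => lc u (mzero n)) h.
move: h1 h2; rewrite /= !E !lc_D !lc_B !eqxx ne eq_sym ne addr0 add0r.
by move=> -> ->; rewrite addr0 add0r.
Qed.

Lemma sig_props i (sg dl : R -> R) :
  (forall r, x i * iota r = iota (sg r) * x i + iota (dl r)) ->
  [/\ klinear sg, klinear dl, (forall r s, sg (r * s) = sg r * sg s) & sg 1 = 1].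
Proof.
move=> h.
have lin : forall c u v, sg (c *: u + v) = c *: sg u + sg v /\ dl (c *: u + v) = c *: dl u + dl v.
  move=> c u v; apply: (@lin1_unique i).
  rewrite -h !iota_lin mulrDr mulrDl -scalerAr !h scalerDr scalerAl.
  by rewrite addrACA.
split.
- by move=> c u v; case: (lin c u v).
- by move=> c u v; case: (lin c u v).
- move=> r s; have [] := @lin1_unique i (sg (r * s)) (dl (r * s)) (sg r * sg s)
    (sg r * dl s + dl r * s); last by [].
  rewrite -h iotaM mulrA h mulrDl -mulrA h mulrDr !mulrA iotaD !iotaM addrA.
  by [].
- have [] := @lin1_unique i (sg 1) (dl 1) 1 0; last by [].
  by rewrite -h iota1 iota0 mul1r mulr1 addr0.
Qed.

Lemma XLgen j d u : (forall a, (deg a < d)%N -> G d.+1 (x j * mon x a)) ->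
  G d u -> G d.+1 (x j * u).
Proof.
move=> h [f ->]; have [sg [dl [_ hs]]] := hsig j.
rewrite /Sp mulr_sumr; apply: G_sum => a ha; rewrite /Bl mulrA hs mulrDl -mulrA.
rewrite mem_mons in ha.
apply: GD; first by apply: G_mulL; apply: h.
by apply: G_Bl; apply: ltnW.
Qed.

Lemma XM e (i : 'I_n) a : deg a = e -> G e.+2 (x i * mon x a).
Proof.
elim/ltn_ind: e i a => e IHe.
have key : forall m (i : 'I_n), val i = m -> forall a, deg a = e -> G e.+2 (x i * mon x a).
  elim/ltn_ind => m IHm i hi a ha.
  case: (eqVneq (deg a) 0%N) => [h0|hnz].
    have -> : a = mzero n by apply: deg_eq0.
    rewrite mon_addev; last by move=> l _; rewrite ffunE.
    by apply: G_mon; rewrite deg_addev deg0.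
  have [j [hj hlt]] := first_idx hnz.
  case: (leqP (val i) (val j)) => hij.
    rewrite mon_addev; last by move=> l hl; apply: hlt; exact: leq_trans hl hij.
    by apply: G_mon; rewrite deg_addev ha.
  set a' := subev a j.
  have ha' : (deg a').+1 = e by rewrite deg_subev.
  have hz : forall l : 'I_n, (l < j)%N -> a' l = 0%N by move=> l hl; apply: subev_lt.
  have Ea : mon x a = x j * mon x a' by rewrite mon_addev // subevK.
  have [c [_ [r0 [r hr]]]] := hrel j i.
  have Eij : x i * x j = iota r0 + \sum_(l < n) iota (r l) * x l + iota c * x j * x i.
    by rewrite -hr subrK.
  have IHa' : forall l, G e.+1 (x l * mon x a').
    by move=> l; rewrite -ha'; apply: IHe; rewrite -?ha'.
  rewrite Ea mulrA Eij !mulrDl mulr_suml.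
  apply: GD; [apply: GD|].
  - by apply: G_Bl; rewrite -ha' ltnS ltnW.
  - apply: G_sum => l _; rewrite -mulrA; apply: G_mulL.
    exact: G_mono (leqnSn _) (IHa' l).
  - rewrite -!mulrA; apply: G_mulL; apply: XLgen (IHa' i) => b hb.
    move: hb; rewrite ltnS leq_eqVlt => /orP [/eqP hbe|hbe].
      by apply: (IHm (val j)) => //; rewrite -hi.
    by apply: G_mono (@IHe _ hbe j b erefl); rewrite !ltnS ltnW.
by move=> i a ha; apply: (key (val i)).
Qed.

Lemma XL j d u : G d u -> G d.+1 (x j * u).
Proof.
apply: XLgen => a ha; apply: (@G_mono (deg a).+2); last exact: (@XM _ j a erefl).
by rewrite ltnS.
Qed.

Lemma Tfwd e : forall b, deg b = e -> exists s : R -> R,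
  [/\ bijective s, s 0 = 0 & forall r, G e (mon x b * iota r - iota (s r) * mon x b)].
Proof.
elim: e => [|e IH] b hb.
  exists id; split=> //; first by exists id.
  move=> r; rewrite (deg_eq0 hb) mon0 mul1r mulr1 subrr; exact: G0.
have hnz : deg b != 0%N by rewrite hb.
have [j [hj hlt]] := first_idx hnz.
set b' := subev b j.
have hb' : deg b' = e by apply: succn_inj; rewrite deg_subev.
have [s' [bs' s0' hs']] := IH b' hb'.
have [sg [dl [bsg hsg]]] := hsig j.
have [lsg _ _ _] := sig_props hsg.
exists (sg \o s'); split.
- exact: bij_comp.
- by rewrite /= s0' (klin0 lsg).
move=> r.
have Eb : mon x b = x j * mon x b'.
  by rewrite mon_addev ?subevK // => l hl; apply: subev_lt.
set g := mon x b' * iota r - iota (s' r) * mon x b'.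
have Eg : mon x b' * iota r = iota (s' r) * mon x b' + g by rewrite /g addrC subrK.
rewrite Eb -mulrA Eg mulrDr [x j * (iota _ * _)]mulrA hsg mulrDl /=.
have -> : iota (sg (s' r)) * x j * mon x b' + iota (dl (s' r)) * mon x b' + x j * g -
   iota (sg (s' r)) * (x j * mon x b') = iota (dl (s' r)) * mon x b' + x j * g.
  by rewrite -mulrA addrAC [_ + _ - _]addrAC subrr add0r.
apply: GD; first by apply: G_Bl; rewrite hb'.
by apply: XL; apply: hs'.
Qed.

Definition RS d u := exists f, u = Rs d f.

Lemma RS0 d : RS d 0. Proof. by exists (fun _ => 0); rewrite Sp0 // => a; apply: Br_lin. Qed.
Lemma RSD d u v : RS d u -> RS d v -> RS d (u + v).
Proof. by move=> [f ->] [g ->]; exists (fun a => f a + g a); rewrite Sp_D // => a; apply: Br_lin. Qed.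
Lemma RSN d u : RS d u -> RS d (- u).
Proof. by move=> [f ->]; exists (fun a => - f a); rewrite Sp_N // => a; apply: Br_lin. Qed.
Lemma RS_mono d e u : (d <= e)%N -> RS d u -> RS e u.
Proof. by move=> de [f ->]; exists (ext d f); rewrite (Sp_lift _ _ de) // => a; apply: Br_lin. Qed.
Lemma RS_sum d (I : eqType) (r : seq I) (F : I -> A) : (forall i, i \in r -> RS d (F i)) ->
  RS d (\sum_(i <- r) F i).
Proof.
move=> h; rewrite big_seq; apply: (big_ind (RS d)); [exact: RS0 | exact: RSD | exact: h].
Qed.
Lemma RS_Br d a r : (deg a < d)%N -> RS d (mon x a * iota r).
Proof.
move=> h; apply: (RS_mono h); exists (fun b => if b == a then r else 0).
by rewrite -Sp_single // => b; apply: Br_lin.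
Qed.

Lemma R_from_G d : forall u, G d u -> RS d u.
Proof.
elim: d => [|d IH] u [f ->].
  by exists (fun _ => 0); rewrite /Sp !big1_seq // => a; rewrite mem_mons.
rewrite /Sp; apply: RS_sum => a ha; rewrite mem_mons ltnS in ha.
have [s [[g sg gs] s0 hs]] := @Tfwd (deg a) a erefl.
have -> : Bl a (f a) = mon x a * iota (g (f a)) -
    (mon x a * iota (g (f a)) - iota (s (g (f a))) * mon x a).
  by rewrite gs subKr.
apply: RSD; first by apply: RS_Br.
apply: RSN; apply: RS_mono (leqnSn d) (IH _ _).
exact: G_mono ha (hs _).
Qed.

Lemma R_gen : forall u, exists d f, u = Rs d f.
Proof.
move=> u; have [d [f E]] := L_gen u.
have [g Eg] : RS d u by apply: R_from_G; exists f.
by exists d, g.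
Qed.

Definition sT (b : mi) : R -> R := epsilon (inhabits id) (fun s =>
  [/\ bijective s, s 0 = 0 & forall r, G (deg b) (mon x b * iota r - iota (s r) * mon x b)]).

Lemma sT_spec b : [/\ bijective (sT b), sT b 0 = 0 &
  forall r, G (deg b) (mon x b * iota r - iota (sT b r) * mon x b)].
Proof. exact: (epsilon_spec _ _ (@Tfwd (deg b) b erefl)). Qed.

Lemma R_ind : forall d f, Rs d f = 0 -> forall b, b \in mons n d -> f b = 0.
Proof.
elim=> [|d IH] f h b hb; first by move: hb; rewrite mem_mons.
have top : forall b0, deg b0 = d -> f b0 = 0.
  move=> b0 hb0; have := congr1 (fun u => lc u b0) h.
  rewrite /= (klin0 (lc_lin b0)) /Sp (klin_sum _ _ _ (lc_lin b0)).
  have E : forall b1, b1 \in mons n d.+1 ->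
      lc (Br b1 (f b1)) b0 = if b1 == b0 then sT b1 (f b1) else 0.
    move=> b1 hb1; case: (sT_spec b1) => _ _ hs.
    have -> : Br b1 (f b1) = Bl b1 (sT b1 (f b1)) +
        (mon x b1 * iota (f b1) - iota (sT b1 (f b1)) * mon x b1).
      by rewrite /Br /Bl addrC subrK.
    rewrite lc_D lc_B (G_lc (hs _)) ?addr0 //.
    by rewrite hb0 -ltnS -mem_mons.
  rewrite (eq_big_seq _ E) -big_mkcond sum_pick ?mons_uniq ?mem_mons ?hb0 //.
  case: (sT_spec b0) => [[g c1 c2] s0 _] /(congr1 g); rewrite c1 => ->.
  by rewrite -s0 c1.
have h' : Rs d f = 0.
  rewrite (Sp_lift _ _ (leqnSn d)); last by move=> a; apply: Br_lin.
  transitivity (Rs d.+1 f); last exact: h.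
  apply: eq_big_seq => b1 hb1; rewrite /ext mem_mons; case: ifP => // hlt.
  rewrite top ?(klin0 (Br_lin b1)) //.
  by apply/eqP; rewrite eqn_leq -ltnS -mem_mons hb1 leqNgt hlt.
move: hb; rewrite mem_mons ltnS leq_eqVlt => /orP [/eqP|] hb'.
  exact: top.
by apply: IH h' _ _; rewrite mem_mons.
Qed.

Definition rc := coef Br.

Lemma rc_lin a : klinear (fun u => rc u a).
Proof. exact: (coef_lin Br_lin R_ind R_gen). Qed.
Lemma rc_B b r a : rc (Br b r) a = if b == a then r else 0.
Proof. exact: (coef_B Br_lin R_ind). Qed.


Lemma klin_mulr (B : algType k) (w : B) : klinear (fun u : B => u * w).
Proof. by move=> c u v; rewrite mulrDl -scalerAl. Qed.
Lemma klin_mull (B : algType k) (w : B) : klinear (fun u : B => w * u).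
Proof. by move=> c u v; rewrite mulrDr -scalerAr. Qed.

Hypothesis hcinv : forall i j : 'I_n, (i < j)%N -> exists c : R,
  (exists d : R, c * d = 1 /\ d * c = 1) /\
  exists (r0 : R) (r : 'I_n -> R),
    x j * x i - iota c * x i * x j = iota r0 + \sum_(l < n) iota (r l) * x l.
Context (Re : algType k) (tR : R -> R -> Re) (hRe : is_enveloping tR).
Context (Ae : algType k) (tA : A -> A -> Ae) (hAe : is_enveloping tA).

Lemma htR : is_tensor tR. Proof. by case: hRe. Qed.
Lemma tR11 : tR 1 1 = 1. Proof. by case: hRe => _ []. Qed.
Lemma tRM a b a' b' : tR a b * tR a' b' = tR (a * a') (b' * b).
Proof. by case: hRe => _ [] _ ->. Qed.
Lemma htA : is_tensor tA. Proof. by case: hAe. Qed.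
Lemma tA11 : tA 1 1 = 1. Proof. by case: hAe => _ []. Qed.
Lemma tAM a b a' b' : tA a b * tA a' b' = tA (a * a') (b' * b).
Proof. by case: hAe => _ [] _ ->. Qed.

Definition phi : Re -> Ae := tlift tR (fun a b => tA (iota a) (iota b)).

Lemma phi_bil : kbilinear (fun a b => tA (iota a) (iota b)).
Proof.
split=> c a a' b /=; rewrite iota_lin.
  by rewrite (bilDl htA.1) (bilZl htA.1).
by rewrite (bilDr htA.1) (bilZr htA.1).
Qed.

Lemma phi_lin : klinear phi. Proof. exact: (tlift_lin htR phi_bil). Qed.
Lemma phi_t a b : phi (tR a b) = tA (iota a) (iota b). Proof. exact: (tlift_t htR phi_bil). Qed.
Lemma phiD u v : phi (u + v) = phi u + phi v. Proof. exact: (klinD phi_lin). Qed.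
Lemma phi0 : phi 0 = 0. Proof. exact: (klin0 phi_lin). Qed.
Lemma phiN u : phi (- u) = - phi u. Proof. exact: (klinN phi_lin). Qed.
Lemma phiB u v : phi (u - v) = phi u - phi v. Proof. exact: (klinB phi_lin). Qed.
Lemma phiZ c u : phi (c *: u) = c *: phi u. Proof. exact: (klinZ phi_lin). Qed.
Lemma phi_sum I (r : seq I) (P : pred I) F :
  phi (\sum_(i <- r | P i) F i) = \sum_(i <- r | P i) phi (F i).
Proof. exact: (klin_sum r P F phi_lin). Qed.

Lemma phi1 : phi 1 = 1.
Proof. by rewrite -tR11 phi_t iota1 tA11. Qed.

Lemma phiM u v : phi (u * v) = phi u * phi v.
Proof.
have Hpure : forall a b v, phi (tR a b * v) = phi (tR a b) * phi v.
  move=> a b; apply: (tensor_ext htR).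
  - exact: (klin_comp phi_lin (klin_mull _)).
  - exact: (klin_comp (klin_mull _) phi_lin).
  move=> a' b'; rewrite tRM !phi_t !iotaM tAM.
  by [].
move: u; apply: (tensor_ext htR).
- exact: (klin_comp phi_lin (klin_mulr _)).
- exact: (klin_comp (klin_mulr _) phi_lin).
by move=> a b; apply: Hpure.
Qed.



Local Notation mi2 := {ffun 'I_(n + n) -> nat}.

Definition y (l : 'I_(n + n)) : Ae :=
  match split l with inl i => tA (x i) 1 | inr j => tA 1 (x (rev_ord j)) end.
Definition gL (g : mi2) : mi := [ffun i => g (lshift n i)].
Definition gR (g : mi2) : mi := [ffun j => g (rshift n (rev_ord j))].
Definition gam (a b : mi) : mi2 :=
  [ffun l => match split l with inl i => a i | inr j => b (rev_ord j) end].

Lemma y_l i : y (lshift n i) = tA (x i) 1.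
Proof. by rewrite /y (@unsplitK n n (inl i)). Qed.
Lemma y_r j : y (rshift n j) = tA 1 (x (rev_ord j)).
Proof. by rewrite /y (@unsplitK n n (inr j)). Qed.

Lemma gL_gam a b : gL (gam a b) = a.
Proof. by apply/ffunP => i; rewrite !ffunE (@unsplitK n n (inl i)). Qed.
Lemma gR_gam a b : gR (gam a b) = b.
Proof. by apply/ffunP => j; rewrite !ffunE (@unsplitK n n (inr _)) rev_ordK. Qed.

Lemma gLR_inj g g' : gL g = gL g' -> gR g = gR g' -> g = g'.
Proof.
move=> hL hR; apply/ffunP => l; rewrite -(splitK l); case: (split l) => [i|j] /=.
  by have := congr1 (fun f : mi => f i) hL; rewrite !ffunE.
have := congr1 (fun f : mi => f (rev_ord j)) hR; rewrite !ffunE rev_ordK.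
by [].
Qed.

Lemma tA_expl a m : tA a 1 ^+ m = tA (a ^+ m) 1.
Proof. by elim: m => [|m IH]; rewrite ?expr0 ?tA11 // !exprS IH tAM mulr1. Qed.
Lemma tA_expr b m : tA 1 b ^+ m = tA 1 (b ^+ m).
Proof. by elim: m => [|m IH]; rewrite ?expr0 ?tA11 // exprS IH tAM mulr1 -exprSr. Qed.

Lemma prod_tAl (I : Type) (r : seq I) (F : I -> A) :
  \prod_(i <- r) tA (F i) 1 = tA (\prod_(i <- r) F i) 1.
Proof.
symmetry; apply: (big_morph (fun a => tA a 1)); last exact: tA11.
by move=> a b; rewrite tAM mulr1.
Qed.

Lemma prod_tAr_rev m (b : 'I_m -> A) :
  \prod_(j < m) tA 1 (b j) = tA 1 (\prod_(j < m) b (rev_ord j)).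
Proof.
elim: m b => [|m IH] b; first by rewrite !big_ord0 tA11.
rewrite big_ord_recr /= (IH (fun j => b (widen_ord (leqnSn m) j))) big_ord_recl tAM mul1r.
congr tA; congr (_ * _).
  by congr b; apply: val_inj; rewrite /= subn1.
apply: eq_bigr => j _; congr b; apply: val_inj => /=.
by rewrite subSS.
Qed.

Lemma mon_y g : mon y g = tA (mon x (gL g)) (mon x (gR g)).
Proof.
rewrite /mon big_split_ord /=.
under eq_bigr do rewrite y_l tA_expl.
under [in X in _ * X]eq_bigr do rewrite y_r tA_expr.
rewrite prod_tAl prod_tAr_rev tAM !mulr1; congr tA.
  by apply: eq_bigr => i _; rewrite ffunE.
by apply: eq_bigr => j _; rewrite rev_ordK ffunE.
Qed.

Definition tm (f g : R -> R) : Re -> Re := tlift tR (fun a b => tR (f a) (g b)).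

Lemma tm_bil (f g : R -> R) : klinear f -> klinear g -> kbilinear (fun a b => tR (f a) (g b)).
Proof.
move=> lf lg; split=> c a a' b /=.
  by rewrite lf (bilDl htR.1) (bilZl htR.1).
by rewrite lg (bilDr htR.1) (bilZr htR.1).
Qed.

Lemma tm_lin (f g : R -> R) : klinear f -> klinear g -> klinear (tm f g).
Proof. by move=> lf lg; apply: (tlift_lin htR (tm_bil lf lg)). Qed.
Lemma tm_t (f g : R -> R) a b : klinear f -> klinear g -> tm f g (tR a b) = tR (f a) (g b).
Proof. by move=> lf lg; apply: (tlift_t htR (tm_bil lf lg)). Qed.

Lemma tm_bij (f g f' g' : R -> R) : cancel f f' -> cancel f' f -> cancel g g' -> cancel g' g ->
  klinear f -> klinear g -> klinear f' -> klinear g' -> bijective (tm f g).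
Proof.
move=> c1 c2 c3 c4 l1 l2 l3 l4; exists (tm f' g').
  apply: (tensor_ext htR (g2 := id)).
  - exact: (klin_comp (tm_lin l3 l4) (tm_lin l1 l2)).
  - by [].
  by move=> a b /=; rewrite !tm_t // c1 c3.
apply: (tensor_ext htR (g2 := id)).
- exact: (klin_comp (tm_lin l1 l2) (tm_lin l3 l4)).
- by [].
by move=> a b /=; rewrite !tm_t // c2 c4.
Qed.

Lemma inv_lin (f g : R -> R) : cancel f g -> cancel g f -> klinear f -> klinear g.
Proof. by move=> fg gf lf c u v; apply: (can_inj fg); rewrite lf !gf. Qed.
Lemma inv_mul (f g : R -> R) : cancel f g -> cancel g f ->
  (forall r s, f (r * s) = f r * f s) -> forall r s, g (r * s) = g r * g s.
Proof. by move=> fg gf hm r s; apply: (can_inj fg); rewrite hm !gf. Qed.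
Lemma inv_one (f g : R -> R) : cancel f g -> cancel g f -> f 1 = 1 -> g 1 = 1.
Proof. by move=> fg gf h1; apply: (can_inj fg); rewrite gf h1. Qed.

Lemma yl_comm i (sg dl : R -> R) :
  (forall r, x i * iota r = iota (sg r) * x i + iota (dl r)) -> klinear sg -> klinear dl ->
  forall v, y (lshift n i) * phi v = phi (tm sg id v) * y (lshift n i) + phi (tm dl id v).
Proof.
move=> hs lsg ldl; apply: (tensor_ext htR).
- exact: (klin_comp (klin_mull _) phi_lin).
- apply: klin_add; last exact: (klin_comp phi_lin (tm_lin ldl (@klin_id _ _))).
  exact: (klin_comp (klin_mulr _) (klin_comp phi_lin (tm_lin lsg (@klin_id _ _)))).
move=> a b; rewrite y_l !tm_t ?(@klin_id _ _) // !phi_t !tAM hs mulr1 mul1r.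
by rewrite (bilDl htA.1).
Qed.

Lemma yr_comm j (sg dl g : R -> R) :
  (forall r, x (rev_ord j) * iota r = iota (sg r) * x (rev_ord j) + iota (dl r)) ->
  cancel sg g -> cancel g sg -> klinear sg -> klinear dl -> klinear g ->
  forall v, y (rshift n j) * phi v =
    phi (tm id g v) * y (rshift n j) + phi (- tm id (fun r => dl (g r)) v).
Proof.
move=> hs c1 c2 lsg ldl lg; apply: (tensor_ext htR).
- exact: (klin_comp (klin_mull _) phi_lin).
- apply: klin_add; last first.
    exact: (klin_comp phi_lin (klin_opp (tm_lin (@klin_id _ _) (klin_comp ldl lg)))).
  exact: (klin_comp (klin_mulr _) (klin_comp phi_lin (tm_lin (@klin_id _ _) lg))).
move=> a b; rewrite y_r !tm_t ?(@klin_id _ _) //; last exact: (klin_comp ldl lg).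
rewrite phiN !phi_t !tAM mulr1 mul1r.
have E : iota b * x (rev_ord j) = x (rev_ord j) * iota (g b) - iota (dl (g b)).
  by rewrite hs c2 addrK.
by rewrite E (bilBr htA.1).
Qed.

Definition Lin1 (w : Ae) := exists (r0 : Re) (r : 'I_(n + n) -> Re),
  w = phi r0 + \sum_(l < n + n) phi (r l) * y l.

Lemma Lin1_0 : Lin1 0.
Proof.
exists 0, (fun _ => 0); rewrite phi0 add0r big1 // => l _.
by rewrite /= ?phi0 mul0r.
Qed.
Lemma Lin1_D u v : Lin1 u -> Lin1 v -> Lin1 (u + v).
Proof.
move=> [r0 [r ->]] [r0' [r' ->]]; exists (r0 + r0'), (fun l => r l + r' l).
rewrite phiD addrACA -big_split /=; congr (_ + _); apply: eq_bigr => l _.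
by rewrite phiD mulrDl.
Qed.
Lemma Lin1_N u : Lin1 u -> Lin1 (- u).
Proof.
move=> [r0 [r ->]]; exists (- r0), (fun l => - r l).
rewrite phiN opprD -sumrN; congr (_ + _); apply: eq_bigr => l _.
by rewrite phiN mulNr.
Qed.
Lemma Lin1_B u v : Lin1 u -> Lin1 v -> Lin1 (u - v).
Proof. by move=> hu hv; apply: Lin1_D => //; apply: Lin1_N. Qed.
Lemma Lin1_mulL w u : Lin1 u -> Lin1 (phi w * u).
Proof.
move=> [r0 [r ->]]; exists (w * r0), (fun l => w * r l).
rewrite mulrDr phiM mulr_sumr; congr (_ + _); apply: eq_bigr => l _.
by rewrite phiM mulrA.
Qed.
Lemma Lin1_phi r : Lin1 (phi r).
Proof.
exists r, (fun _ => 0); rewrite big1 ?addr0 // => l _.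
by rewrite /= ?phi0 mul0r.
Qed.
Lemma Lin1_single r l : Lin1 (phi r * y l).
Proof.
exists 0, (fun l' => if l' == l then r else 0); rewrite phi0 add0r.
rewrite (bigD1 l) //= eqxx big1 ?addr0 // => l' /negbTE ->.
by rewrite /= ?phi0 mul0r.
Qed.
Lemma Lin1_sum (I : Type) (s : seq I) (F : I -> Ae) : (forall i, Lin1 (F i)) ->
  Lin1 (\sum_(i <- s) F i).
Proof.
move=> h; apply: (big_ind Lin1); [exact: Lin1_0 | exact: Lin1_D | by move=> i _].
Qed.

Lemma sig_clause l : exists sg dl : Re -> Re, [/\ bijective sg, klinear sg &
  forall v, y l * phi v = phi (sg v) * y l + phi (dl v)].
Proof.
rewrite -(splitK l); case: (split l) => [i|j] /=.
  have [sg [dl [[g c1 c2] hs]]] := hsig i.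
  have [lsg ldl _ _] := sig_props hs.
  have lg := inv_lin c1 c2 lsg.
  exists (tm sg id), (tm dl id); split.
  - by apply: (tm_bij c1 c2 (g' := id)) => //; exact: klin_id.
  - by apply: tm_lin => //; exact: klin_id.
  exact: yl_comm.
have [sg [dl [[g c1 c2] hs]]] := hsig (rev_ord j).
have [lsg ldl _ _] := sig_props hs.
have lg := inv_lin c1 c2 lsg.
exists (tm id g), (fun v => - tm id (fun r => dl (g r)) v); split.
- by apply: (tm_bij (f' := id) _ _ c2 c1) => //; exact: klin_id.
- by apply: tm_lin => //; exact: klin_id.
exact: yr_comm.
Qed.

Lemma Lin1_yphi l w : Lin1 (y l * phi w).
Proof.
have [sg [dl [_ _ ->]]] := sig_clause l.
by apply: Lin1_D; [exact: Lin1_single | exact: Lin1_phi].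
Qed.

Lemma cinv_clause (i j : 'I_(n + n)) : (i < j)%N -> exists c : Re,
  (exists d : Re, c * d = 1 /\ d * c = 1) /\ Lin1 (y j * y i - phi c * y i * y j).
Proof.
rewrite -(splitK i) -(splitK j).
case: (split i) => [p|p]; case: (split j) => [q|q] /= hij.
- have [c [[d [cd dc]] [r0 [r hr]]]] := hcinv hij.
  exists (tR c 1); split.
    by exists (tR d 1); rewrite !tRM !mulr1 ?cd ?dc tR11.
  rewrite !y_l phi_t iota1 !tAM !mulr1 -(bilBl htA.1) hr (bilDl htA.1) (bil_suml htA.1).
  apply: Lin1_D; first by rewrite -iota1 -phi_t; exact: Lin1_phi.
  apply: Lin1_sum => l.
  have -> : tA (iota (r l) * x l) 1 = phi (tR (r l) 1) * y (lshift n l).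
    by rewrite phi_t y_l tAM iota1 mulr1.
  exact: Lin1_single.
- exists 1; split; first by exists 1; rewrite mulr1.
  rewrite y_l y_r phi1 mul1r !tAM !mulr1 !mul1r subrr.
  exact: Lin1_0.
- by move: hij; rewrite /= ltnNge (leq_trans (ltnW (ltn_ord q)) (leq_addr _ _)).
set a := rev_ord p; set b := rev_ord q.
have hpq : (p < q)%N by move: hij; rewrite /= ltn_add2l.
have hba : (b < a)%N.
  by rewrite /a /b /=; have := ltn_ord q; lia.
have [c [[d [cd dc]] [r0 [r hr]]]] := hcinv hba.
have [sga [dla [[ga ca1 ca2] hsa]]] := hsig a.
have [lsa lda msa osa] := sig_props hsa.
have lga := inv_lin ca1 ca2 lsa; have mga := inv_mul ca1 ca2 msa; have oga := inv_one ca1 ca2 osa.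
have [sgb [dlb [[gb cb1 cb2] hsb]]] := hsig b.
have [lsb ldb msb osb] := sig_props hsb.
have lgb := inv_lin cb1 cb2 lsb; have mgb := inv_mul cb1 cb2 msb; have ogb := inv_one cb1 cb2 osb.
have hi := yr_comm hsa ca1 ca2 lsa lda lga.
have hj := yr_comm hsb cb1 cb2 lsb ldb lgb.
have lid : klinear (fun r : R => r) by [].
set Yi := y (rshift n p) in hi *; set Yj := y (rshift n q) in hj *.
set v := tR 1 c.
have Ec : tm id ga (tm id gb v) = tR 1 (ga (gb c)) by rewrite !tm_t.
exists (tR 1 (ga (gb c))); split.
  exists (tR 1 (ga (gb d))); rewrite !tRM !mulr1 -!mga -!mgb ?cd ?dc ogb oga tR11.
  by [].
set T1 := phi (tR 1 r0) + \sum_(l < n) y (rshift n (rev_ord l)) * phi (tR 1 (r l)).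
set T2 := phi (- tm id (fun r => dla (ga r)) (tm id gb v)) * Yj +
  Yi * phi (- tm id (fun r => dlb (gb r)) v).
have E1 : Yj * Yi = Yi * Yj * phi v + T1.
  have Eab : x a * x b = iota r0 + \sum_(l < n) iota (r l) * x l + iota c * x b * x a.
    by rewrite -hr subrK.
  rewrite /Yi /Yj !y_r -/a -/b /v /T1 phi_t iota1 !tAM !mulr1 Eab.
  rewrite (bilDr htA.1) addrC; congr (_ + _); first by rewrite mulrA.
  rewrite (bilDr htA.1) phi_t iota1 (bil_sumr htA.1); congr (_ + _).
  apply: eq_bigr => l _; rewrite y_r rev_ordK phi_t iota1 tAM mulr1.
  by [].
have E2 : Yi * Yj * phi v = phi (tR 1 (ga (gb c))) * Yi * Yj + T2.
  by rewrite -mulrA hj mulrDr mulrA hi -Ec /T2 mulrDl addrA.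
rewrite E1 E2 -[_ + T2 + T1]addrA addrAC subrr add0r.
apply: Lin1_D; apply: Lin1_D.
- exact: Lin1_single.
- exact: Lin1_yphi.
- exact: Lin1_phi.
- apply: Lin1_sum => l; exact: Lin1_yphi.
Qed.

Lemma regroup2 (V : nmodType) (I J : eqType) (s : seq I) (r : seq J) (h : I -> J) (F : I -> V) :
  uniq r -> (forall b, b \in s -> h b \in r) ->
  \sum_(b <- s) F b = \sum_(a <- r) \sum_(b <- s | h b == a) F b.
Proof.
move=> ur sr; rewrite (exchange_big_dep predT) //=; apply: eq_big_seq => b bs.
rewrite (eq_bigl (fun a => a == h b)); last by move=> a; rewrite eq_sym.
by rewrite (sum_pick (fun=> F b) ur (sr _ bs)).
Qed.

Definition Gen' (w : Ae) := exists s : seq (Re * mi2), w = \sum_(p <- s) phi p.1 * mon y p.2.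

Lemma Gen'_0 : Gen' 0. Proof. by exists [::]; rewrite big_nil. Qed.
Lemma Gen'_D u v : Gen' u -> Gen' v -> Gen' (u + v).
Proof. by move=> [s ->] [s' ->]; exists (s ++ s'); rewrite big_cat. Qed.
Lemma Gen'_sum (I : Type) (s : seq I) (F : I -> Ae) : (forall i, Gen' (F i)) ->
  Gen' (\sum_(i <- s) F i).
Proof. by move=> h; apply: (big_ind Gen'); [exact: Gen'_0 | exact: Gen'_D | move=> i _]. Qed.
Lemma Gen'_single r g : Gen' (phi r * mon y g).
Proof. by exists [:: (r, g)]; rewrite big_seq1. Qed.

Lemma Gen'_tA a b : Gen' (tA a b).
Proof.
have [d [f ->]] := L_gen a; have [e [g ->]] := R_gen b.
rewrite /Sp (bil_suml htA.1); apply: Gen'_sum => al; rewrite (bil_sumr htA.1).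
apply: Gen'_sum => be.
have -> : tA (Bl al (f al)) (Br be (g be)) = phi (tR (f al) (g be)) * mon y (gam al be).
  by rewrite mon_y gL_gam gR_gam phi_t tAM.
exact: Gen'_single.
Qed.

Lemma Ae_gen : forall w : Ae, exists (s : seq mi2) (c : mi2 -> Re),
  w = \sum_(g <- s) phi (c g) * mon y g.
Proof.
move=> w; have [s ->] := tensor_span htA w.
have [s' ->] : Gen' (\sum_(p <- s) p.1.1 *: tA p.1.2 p.2).
  by apply: Gen'_sum => p; rewrite -(bilZl htA.1); apply: Gen'_tA.
exists (undup (map snd s')), (fun g => \sum_(p <- s' | p.2 == g) p.1).
rewrite (@regroup2 _ _ _ s' (undup (map snd s')) snd _ (undup_uniq _)); last first.
  by move=> p ps; rewrite mem_undup; apply: map_f.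
apply: eq_bigr => g _; rewrite phi_sum mulr_suml; apply: eq_bigr => p /eqP ->.
by [].
Qed.

Definition Psi (a0 b0 : mi) : Ae -> Re := tlift tA (fun a b => tR (lc a a0) (rc b b0)).

Lemma Psi_bil a0 b0 : kbilinear (fun a b => tR (lc a a0) (rc b b0)).
Proof.
split=> c a a' b /=.
  rewrite (_ : lc (c *: a + a') a0 = c *: lc a a0 + lc a' a0); last exact: (lc_lin a0 c a a').
  by rewrite (bilDl htR.1) (bilZl htR.1).
rewrite (_ : rc (c *: a' + b) b0 = c *: rc a' b0 + rc b b0); last exact: (rc_lin b0 c a' b).
by rewrite (bilDr htR.1) (bilZr htR.1).
Qed.

Lemma Psi_prop a0 b0 u al be :
  Psi a0 b0 (phi u * tA (mon x al) (mon x be)) = if (al == a0) && (be == b0) then u else 0.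
Proof.
move: u; apply: (tensor_ext htR).
- exact: (klin_comp (tlift_lin htA (Psi_bil a0 b0)) (klin_comp (klin_mulr _) phi_lin)).
- by move=> c u v /=; case: ifP => _ //; rewrite scaler0 addr0.
move=> a b; rewrite /Psi phi_t tAM (tlift_t htA (Psi_bil a0 b0)).
have h1 := lc_B al a a0; have h2 := rc_B be b b0; rewrite /Bl /Br in h1 h2.
rewrite h1 h2; case: (al == a0); case: (be == b0) => /=;
  by rewrite ?(bil0l htR.1) ?(bil0r htR.1).
Qed.

Lemma gg_eq g g0 : (gL g == gL g0) && (gR g == gR g0) = (g == g0).
Proof.
apply/andP/eqP => [[/eqP h1 /eqP h2]|->]; first exact: gLR_inj.
by rewrite !eqxx.
Qed.

Lemma Ae_ind : forall (s : seq mi2) (c : mi2 -> Re), uniq s ->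
  \sum_(g <- s) phi (c g) * mon y g = 0 -> forall g0, g0 \in s -> c g0 = 0.
Proof.
move=> s c us h g0 hg0.
have lP : klinear (Psi (gL g0) (gR g0)) := tlift_lin htA (Psi_bil (gL g0) (gR g0)).
have := congr1 (Psi (gL g0) (gR g0)) h.
rewrite (klin0 lP) (klin_sum _ _ _ lP).
under eq_bigr do rewrite mon_y Psi_prop gg_eq.
by rewrite -big_mkcond sum_pick.
Qed.

Lemma phi_inj : injective phi.
Proof.
move=> u v h; apply/eqP; rewrite -subr_eq0; apply/eqP.
apply: (@Ae_ind [:: mzero (n + n)] (fun _ => u - v)) => //; last exact: mem_head.
by rewrite big_seq1 mon0 mulr1 phiB h subrr.
Qed.

Lemma Ae_bij : bijective_skewPBW phi y.
Proof.
have nz : forall c d : Re, c * d = 1 -> c != 0.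
  by move=> c d cd; apply/eqP => c0; move: cd; rewrite c0 mul0r => /eqP; rewrite eq_sym oner_eq0.
split; [split|split].
- by split; [exact: phi_inj | exact: phi1 | exact: phiD | exact: phiM].
- exact: Ae_gen.
- exact: Ae_ind.
- move=> i r hr; have [sg [dl [bsg lsg h]]] := sig_clause i.
  exists (sg r); split.
    apply/eqP => E; move/eqP: hr; apply.
    by apply: (bij_inj bsg); rewrite E (klin0 lsg).
  by exists (dl r); rewrite h addrAC subrr add0r.
- move=> i j; case: (ltngtP i j) => [hij|hji|hij].
  + have [c [[d [cd dc]] hL]] := cinv_clause hij.
    by exists c; split; [exact: nz cd | exact: hL].
  + have [c [[d [cd dc]] hL]] := cinv_clause hji.
    exists d; split; first exact: nz dc.
    set L := y i * y j - phi c * y j * y i in hL.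
    have -> : y j * y i - phi d * y i * y j = - (phi d * L).
      rewrite /L mulrBr !mulrA -phiM dc phi1 mul1r opprB.
      by [].
    by apply: Lin1_N; apply: Lin1_mulL.
  + have -> : i = j by apply: val_inj.
    exists 1; split; first exact: oner_neq0.
    by rewrite phi1 mul1r subrr; exact: Lin1_0.
- move=> i; have [sg [dl [bsg _ h]]] := sig_clause i.
  by exists sg, dl.
- move=> i j hij; have [c [hc hL]] := cinv_clause hij.
  by exists c.
Qed.

End SkewA.

Theorem theorem4p3 (k : comRingType) (R A : algType k) (iota : R -> A)
  (n : nat) (x : 'I_n -> A)
  (iota_k : forall (c : k) (r : R), iota (c *: r) = c *: iota r)
  (hA : bijective_skewPBW iota x)
  (Re : algType k) (tR : R -> R -> Re) (hRe : is_enveloping tR)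
  (Ae : algType k) (tA : A -> A -> Ae) (hAe : is_enveloping tA) :
  exists phi : Re -> Ae,
    (forall r r' : R, phi (tR r r') = tA (iota r) (iota r')) /\
    (forall (c : k) (u : Re), phi (c *: u) = c *: phi u) /\
    exists (m : nat) (y : 'I_m -> Ae), bijective_skewPBW phi y.
Proof.
case: hA => [[hemb hgen hind _ hrel] [hsig hcinv]].
exists (phi iota tR tA); split.
  by move=> r r'; apply: phi_t.
split; first by move=> c u; apply: phiZ.
exists (n + n), (y x tA).
by apply: Ae_bij.
Qed.
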